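(* Let $M\geq 1$, $P=4M-3$, and let $x\in\ell(\mathbb{Z}_P)$ satisfy $x[p]=0$ for all $p=M,\ldots,4M-4$. Then for all $p=1,\ldots,2M-2$, $$\operatorname{CirAut}(x+Rx)[p]=2\operatorname{Re}\langle x,T^px\rangle+\langle x,RT^{-p}x\rangle.$$
   Context: $\ell(\mathbb{Z}_P)$ denotes the space of $P$-periodic functions $u\colon\mathbb{Z}\to\mathbb{C}$, with inner product $\langle u,v\rangle=\sum_{p\in\mathbb{Z}_P}u[p]\overline{v[p]}$. The translation operator is $(T^pu)[p']:=u[p'-p]$ and the reversal operator is $(Ru)[p]:=u[-p]$. The circular autocorrelation is $\operatorname{CirAut}(u)[p]:=\langle u,T^pu\rangle=\sum_{p'\in\mathbb{Z}_P}u[p']\overline{u[p'-p]}$. *)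

(* Defs.v *)
(* Complex scalars: an arbitrary numClosedFieldType C
   (e.g. algC or complex numbers), with conjugation ^* and real part 'Re. *)
From HB Require Import structures.
From mathcomp Require Import all_boot all_order all_algebra.
Set Implicit Arguments. Unset Strict Implicit. Unset Printing Implicit Defensive.
Import Order.TTheory GRing.Theory Num.Theory.
Local Open Scope ring_scope.

Section Defs.
Variable C : numClosedFieldType.

Definition periodic (P : nat) (u : int -> C) : Prop :=
  forall p : int, u (p + P%:Z) = u p.

Definition inner (P : nat) (u v : int -> C) : C :=
  \sum_(i < P) u (i%:Z) * (v (i%:Z))^*.

Definition transl (p : int) (u : int -> C) : int -> C := fun q => u (q - p).

Definition reversal (u : int -> C) : int -> C := fun q => u (- q).

Definition cirAut (P : nat) (u : int -> C) (p : int) : C :=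
  inner P u (transl p u).

End Defs.

(* Main.v *)
Require Import Defs.
From mathcomp Require Import all_boot all_order all_algebra.
From mathcomp Require Import zify ring lra.
Import Order.TTheory GRing.Theory Num.Theory.
Local Open Scope ring_scope.

Lemma per_nat (C : numClosedFieldType) (P : nat) (x : int -> C) :
  periodic P x -> forall (q : int) (n : nat), x (q + (n * P)%N%:Z) = x q.
Proof.
move=> hp q; elim=> [|n IH]; first by rewrite mul0n addr0.
by rewrite mulSn PoszD addrCA addrC hp IH.
Qed.

Lemma xcong (C : numClosedFieldType) (P : nat) (x : int -> C) :
  periodic P x -> forall (q r n : int), q = r + n * P%:Z -> x q = x r.
Proof.
move=> hp q r [k|k] ->.
  by rewrite -PoszM per_nat.
rewrite -[LHS](@per_nat _ _ _ hp (r + Negz k * P%:Z) k.+1); congr x.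
by rewrite NegzE PoszM mulNr subrK.
Qed.

Lemma shift1 (C : numClosedFieldType) (P : nat) (g : int -> C) :
  (0 < P)%N -> periodic P g ->
  \sum_(i < P) g (i%:Z + 1) = \sum_(i < P) g i%:Z.
Proof.
case: P => [//|P] _ hp.
rewrite big_ord_recr big_ord_recl /= addrC; congr (_ + _).
  have -> : (P%:Z + 1) = 0 + P.+1%:Z by lia.
  by rewrite hp.
apply: eq_bigr => i _; congr g; rewrite /bump /=; lia.
Qed.

Lemma shiftn (C : numClosedFieldType) (P : nat) (g : int -> C) (k : nat) :
  (0 < P)%N -> periodic P g ->
  \sum_(i < P) g (i%:Z + k%:Z) = \sum_(i < P) g i%:Z.
Proof.
move=> hP; elim: k g => [|k IH] g hg.
  by apply: eq_bigr => i _; rewrite addr0.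
rewrite -(IH g hg) -(@shift1 _ _ (fun j => g (j + k%:Z)) hP).
  by apply: eq_bigr => i _; congr g; lia.
by move=> p; rewrite /= -addrA (addrC _ k%:Z) addrA hg.
Qed.

Lemma shiftz (C : numClosedFieldType) (P : nat) (g : int -> C) (k : int) :
  (0 < P)%N -> periodic P g ->
  \sum_(i < P) g (i%:Z + k) = \sum_(i < P) g i%:Z.
Proof.
move=> hP hg; case: k => k; first exact: (@shiftn _ _ _ k hP hg).
have hg' : periodic P (fun j => g (j + Negz k)).
  by move=> p; rewrite /= -addrA (addrC _ (Negz k)) addrA hg.
rewrite -(@shiftn _ _ _ k.+1 hP hg'); apply: eq_bigr => i _; congr g; rewrite NegzE; lia.
Qed.

Lemma reflect_sum (C : numClosedFieldType) (P : nat) (g : int -> C) :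
  (0 < P)%N -> periodic P g ->
  \sum_(i < P) g (- i%:Z) = \sum_(i < P) g i%:Z.
Proof.
move=> hP hg; rewrite (reindex_inj rev_ord_inj) /=.
rewrite -(@shiftz _ _ g (1 - P%:Z) hP hg).
apply: eq_bigr => i _; congr g.
have := ltn_ord i; move=> hi; lia.
Qed.

Theorem lemma1 (C : numClosedFieldType) (M : nat) (hM : (1 <= M)%N)
  (x : int -> C) (hper : periodic (4 * M - 3) x)
  (hsupp : forall p : nat, (M <= p <= 4 * M - 4)%N -> x (p%:Z) = 0) :
  forall p : nat, (1 <= p <= 2 * M - 2)%N ->
    cirAut (4 * M - 3) (fun q => x q + reversal x q) (p%:Z)
    = 2 * 'Re (inner (4 * M - 3) x (transl (p%:Z) x))
      + inner (4 * M - 3) x (reversal (transl (- (p%:Z)) x)).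
Proof.
move=> p /andP[hp1 hp2].
have [N hNdef] : exists N, N = (4 * M - 3)%N by eexists.
rewrite -hNdef in hper *.
have hN : (0 < N)%N by lia.
have xc : forall q r n : int, q = r + n * N%:Z -> x q = x r.
  exact: (@xcong _ _ _ hper).
rewrite /cirAut /inner /transl /reversal.
set A := \sum_(i < N) x i%:Z * (x (i%:Z - p%:Z))^*.
under eq_bigr => i _ do rewrite rmorphD mulrDl !mulrDr.
rewrite !big_split /=.
have hB : \sum_(i < N) x (- i%:Z) * (x (i%:Z - p%:Z))^* = 0.
  have hg : periodic N (fun j => x (- j) * (x (j - p%:Z))^*).
    move=> j /=; congr (_ * _^*); [apply: (xc _ _ (-1) _ ) | apply: (xc _ _ 1 _)]; lia.
  rewrite -(@reflect_sum _ _ _ hN hg) /=.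
  apply: big1 => i _.
  have hi := ltn_ord i.
  case: (ltnP i M) => him.
    rewrite (xc (- i%:Z - p%:Z) ((N - i - p)%N%:Z) (-1)); last by lia.
    by rewrite hsupp ?conjC0 ?mulr0 //; lia.
  rewrite opprK hsupp ?mul0r //; lia.
have hD : \sum_(i < N) x (- i%:Z) * (x (- (i%:Z - p%:Z)))^* = A^*.
  have hg : periodic N (fun j => x (- j) * (x (- (j - p%:Z)))^*).
    move=> j /=; congr (_ * _^*); apply: (xc _ _ (-1) _ ); lia.
  rewrite -(@reflect_sum _ _ _ hN hg) /=.
  have hk : periodic N (fun j => x j * (x (j + p%:Z))^*).
    move=> j /=; congr (_ * _^*); apply: (xc _ _ 1 _ ); lia.
  transitivity (\sum_(i < N) x i%:Z * (x (i%:Z + p%:Z))^*).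
    by apply: eq_bigr => i _; rewrite opprK; congr (_ * (x _)^*); lia.
  rewrite -(@shiftz _ _ _ (- p%:Z) hN hk) /A rmorph_sum /=.
  apply: eq_bigr => i _; rewrite [RHS]rmorphM /= conjCK subrK mulrC.
  by [].
have hE : \sum_(i < N) x i%:Z * (x (- (i%:Z - p%:Z)))^*
        = \sum_(i < N) x i%:Z * (x (- i%:Z - - p%:Z))^*.
  by apply: eq_bigr => i _; congr (_ * (x _)^*); lia.
rewrite hB hD hE ReE -/A.
by field.
Qed.
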